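(* Let $S=\mathbb{Z}[x_0,\dots,x_d]$, fix a prime $p>0$, and let $f(\boldsymbol{x})=g(\boldsymbol{x})+p\,h(\boldsymbol{x})\in S$, where for some fixed integer $m<d$ one has $g(\boldsymbol{x})\in(x_0,\dots,x_m)S$ and $h(\boldsymbol{x})$ is a polynomial in $x_{m+1},\dots,x_d$ only. Set $R=S/(f(\boldsymbol{x}))$. Let $\Lambda_p$ be the ring endomorphism of $P_S=\mathbb{Z}[\boldsymbol{x},\boldsymbol{y}]$ with $\Lambda_p(x_i)=x_i^p$ and $\Lambda_p(y_i-x_i)=(y_i-x_i)^p$, and $\varphi_p(u)=(\Lambda_p(u)-u^p)/p$ for $u\in P_S$. If the local cohomology element \[ \left[\frac{\varphi_p(g(\boldsymbol{x}))}{(x_0\cdots x_m)^p}\right]\in H^{m+1}_{(x_0,\dots,x_m)}(R/pR) \] is nonzero, then so is \[ \left[\frac{\varphi_p\big(f(\boldsymbol{y})-f(\boldsymbol{x})\big)}{\prod_{i=0}^d(y_i-x_i)^p}\right]\in H^{d+1}_{\Delta_R}(P_R/pP_R). \]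
   Context: $P_R=R\otimes_{\mathbb{Z}}R$ is identified with $\mathbb{Z}[\boldsymbol{x},\boldsymbol{y}]/(f(\boldsymbol{x}),f(\boldsymbol{y}))$ ($x_i=x_i\otimes 1$, $y_i=1\otimes x_i$), and $\Delta_R$ is the ideal generated by $y_i-x_i$, $0\le i\le d$. Local cohomology classes are Čech classes of the images of the indicated numerators. *)

(* Defs.v *)
From HB Require Import structures.
From mathcomp Require Import all_boot all_order all_algebra.
From mathcomp Require Import mpoly.
Set Implicit Arguments. Unset Strict Implicit. Unset Printing Implicit Defensive.
Import GRing.Theory.
Local Open Scope ring_scope.

Definition in_ideal (A : comNzRingType) (l : nat) (J : 'I_l -> A) (x : A) : Prop :=
  exists r : 'I_l -> A, x = \sum_(j < l) r j * J j.

(* Vanishing of the top Cech class [u / (a_0 ... a_{n-1})^e] in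
   H^n_{(a_0,...,a_{n-1})}(A / (J)), the top cohomology of the Cech complex
   of the ring A/(J) on the images of a_0,...,a_{n-1}.  Unfolding the
   localization: the class vanishes iff for some N,
   (a_0...a_{n-1})^N u lies in (a_0^{N+e},...,a_{n-1}^{N+e}) + (J). *)
Definition top_cech_class_zero (A : comNzRingType) (l : nat) (J : 'I_l -> A)
    (n : nat) (a : 'I_n -> A) (u : A) (e : nat) : Prop :=
  exists N : nat, exists c : 'I_n -> A,
    in_ideal J ((\prod_(i < n) a i) ^+ N * u - \sum_(i < n) c i * a i ^+ (N + e)).

Definition mdivz (k : nat) (w : {mpoly int[k]}) (p : int) : {mpoly int[k]} :=
  \sum_(mo <- msupp w) ((w@_mo %/ p)%Z)%:MP * 'X_[mo].

(* S = Z[x_0..x_d] : {mpoly int[d.+1]}.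
   P_S = Z[x,y] : {mpoly int[d.+1 + d.+1]}, x_i = 'X_(lshift i), y_i = 'X_(rshift i). *)
Definition xvar (d : nat) (i : 'I_d.+1) : {mpoly int[d.+1 + d.+1]} :=
  'X_(lshift d.+1 i).
Definition yvar (d : nat) (i : 'I_d.+1) : {mpoly int[d.+1 + d.+1]} :=
  'X_(rshift d.+1 i).

Definition in_x (d : nat) (u : {mpoly int[d.+1]}) : {mpoly int[d.+1 + d.+1]} :=
  comp_mpoly [tuple xvar i | i < d.+1] u.
Definition in_y (d : nat) (u : {mpoly int[d.+1]}) : {mpoly int[d.+1 + d.+1]} :=
  comp_mpoly [tuple yvar i | i < d.+1] u.

(* Lambda_p on P_S: x_i |-> x_i^p, y_i |-> x_i^p + (y_i - x_i)^p,
   i.e. Lambda_p(y_i - x_i) = (y_i - x_i)^p. *)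
Definition LambdaP (d p : nat) (u : {mpoly int[d.+1 + d.+1]}) :
    {mpoly int[d.+1 + d.+1]} :=
  comp_mpoly [tuple (match split i with
                     | inl j => xvar j ^+ p
                     | inr j => xvar j ^+ p + (yvar j - xvar j) ^+ p
                     end) | i < d.+1 + d.+1] u.

Definition phiP (d p : nat) (u : {mpoly int[d.+1 + d.+1]}) :
    {mpoly int[d.+1 + d.+1]} :=
  mdivz (LambdaP p u - u ^+ p) (p%:Z).

Definition LambdaS (d p : nat) (u : {mpoly int[d.+1]}) : {mpoly int[d.+1]} :=
  comp_mpoly [tuple ('X_i : {mpoly int[d.+1]}) ^+ p | i < d.+1] u.
Definition phiS (d p : nat) (u : {mpoly int[d.+1]}) : {mpoly int[d.+1]} :=
  mdivz (LambdaS p u - u ^+ p) (p%:Z).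

(* Main.v *)
Require Import Defs.
From HB Require Import structures.
From mathcomp Require Import all_boot all_order all_algebra.
From mathcomp Require Import mpoly.
From mathcomp Require Import ring.
Import GRing.Theory.
Local Open Scope ring_scope.
Lemma hom_eq k (A : comNzRingType) (f1 f2 : {rmorphism {mpoly int[k]} -> A}) :
  (forall i, f1 'X_i = f2 'X_i) -> forall w, f1 w = f2 w.
Proof.
move=> hX; elim/mpolyind => [|c mo w _ _ IH]; first by rewrite !rmorph0.
rewrite !rmorphD IH; congr (_ + _).
rewrite -mul_mpolyC !rmorphM; congr (_ * _).
  have -> : (c%:MP : {mpoly int[k]}) = c%:~R.
    by rewrite -[in LHS](intz c) rmorph_int.
  by rewrite !rmorph_int.
by rewrite mpolyXE_id !rmorph_prod; apply: eq_bigr => i _; rewrite !rmorphXn hX.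
Qed.

Lemma binom_p {A : comNzRingType} p (a b : A) : prime p ->
  exists z, (a + b)^+p - a^+p - b^+p = p%:R * z.
Proof.
case: p => [//|q] pp.
rewrite exprDn big_ord_recr /= big_ord_recl /= subnn subn0 expr0 mulr1 mul1r bin0 binn !mulr1n.
exists (\sum_(i < q) (a ^+ (q.+1 - bump 0 i) * b ^+ bump 0 i) *+ ('C(q.+1, bump 0 i) %/ q.+1)).
have E (x y z : A) : x + y + z - x - z = y by ring.
rewrite E mulr_sumr; apply: eq_bigr => i _.
rewrite mulr_natl -mulrnA divnK //.
apply: prime_dvd_bin => //; by rewrite /bump /= add1n ltnS ltn_ord.
Qed.

Definition pdvd {k} (p : nat) (w : {mpoly int[k]}) := exists Q, w = p%:R * Q.

Lemma frob_lift k p (L : {rmorphism {mpoly int[k]} -> {mpoly int[k]}}) : prime p ->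
  (forall i, pdvd p (L 'X_i - 'X_i ^+ p)) -> forall w, pdvd p (L w - w ^+ p).
Proof.
move=> pp hX.
pose D w := pdvd p (L w - w ^+ p).
have Dadd a b : D a -> D b -> D (a + b).
  move=> [Qa Ea] [Qb Eb]; have [z Ez] := binom_p p a b pp.
  exists (Qa + Qb - z); rewrite rmorphD !mulrDr mulrN -Ea -Eb -Ez; ring.
have Dmul a b : D a -> D b -> D (a * b).
  move=> [Qa Ea] [Qb Eb].
  exists (Qa * L b + a ^+ p * Qb); rewrite rmorphM exprMn mulrDr mulrA -Ea mulrCA -Eb; ring.
have D1 : D 1 by exists 0; rewrite rmorph1 expr1n subrr mulr0.
have Dopp a : D a -> D (- a).
  move=> [Qa Ea]; have [z Ez] := binom_p p (-1 : {mpoly int[k]}) 1 pp.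
  exists (- Qa + z * a ^+ p); rewrite rmorphN exprNn mulrDr mulrN -Ea mulrA -Ez.
  rewrite addNr expr0n (gtn_eqF (prime_gt0 pp)) /= expr1n; ring.
have Dnat n : D n%:R.
  elim: n => [|n IH]; first by exists 0; rewrite rmorph0 expr0n (gtn_eqF (prime_gt0 pp)) !mulr0 subr0.
  by rewrite -addn1 natrD; apply: (Dadd).
have Dint c : D c%:~R.
  case: c => n; first exact: (Dnat).
  by rewrite NegzE mulrNz; apply: (Dopp); exact: (Dnat).
have DX i e : D ('X_i ^+ e).
  elim: e => [|e IH]; first by rewrite expr0; exact: D1.
  by rewrite exprS; apply: (Dmul); [exact: hX | exact: IH].
elim/mpolyind => [|c mo w _ _ IH].
  by exists 0; rewrite rmorph0 expr0n (gtn_eqF (prime_gt0 pp)) !mulr0 subr0.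
apply: (Dadd) => //; rewrite -mul_mpolyC; apply: (Dmul).
  have -> : (c%:MP : {mpoly int[k]}) = c%:~R by rewrite -[in LHS](intz c) rmorph_int.
  exact: Dint.
rewrite mpolyXE_id; apply: (big_ind D) => //; exact: (Dmul).
Qed.

Lemma mdivzK k p (W : {mpoly int[k]}) : (0 < p)%N -> mdivz (p%:R * W) (p%:Z) = W :> {mpoly int[k]}.
Proof.
move=> p0.
have -> : (p%:R * W) = (p%:Z) *: W.
  by rewrite -mul_mpolyC -[p%:Z]natz rmorph_nat.
have pn0 : (p%:Z) != 0 by rewrite eqz_nat -lt0n.
rewrite /mdivz (perm_big _ (msuppZ W pn0)) /= [RHS]mpolyE.
apply: eq_bigr => mo _; by rewrite mcoeffZ mulKz // mul_mpolyC.
Qed.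

Lemma nth_mkt n T (x0 : T) (F : 'I_n -> T) (i : 'I_n) : nth x0 [tuple F j | j < n] i = F i.
Proof. by rewrite -tnth_nth tnth_mktuple. Qed.

Lemma split_l d (j : 'I_d.+1) : split (lshift d.+1 j) = inl j.
Proof. exact: (unsplitK (inl j)). Qed.
Lemma split_r d (j : 'I_d.+1) : split (rshift d.+1 j) = inr j.
Proof. exact: (unsplitK (inr j)). Qed.

Notation tpsi0 d m := [tuple (match split i with inl j => if (j <= m)%N then 0 else 'X_j | inr j => 'X_j end : {mpoly int[d.+1]}) | i < d.+1 + d.+1].
Notation tkap d m := [tuple (if (i <= m)%N then 0 else 'X_i : {mpoly int[d.+1]}) | i < d.+1].

Lemma psi0_inx d m (u : {mpoly int[d.+1]}) :
  comp_mpoly (tpsi0 d m) (in_x u) = comp_mpoly (tkap d m) u.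
Proof.
change ((comp_mpoly (tpsi0 d m) \o comp_mpoly [tuple xvar i | i < d.+1]) u = comp_mpoly (tkap d m) u).
apply: hom_eq => i /=.
by rewrite !comp_mpolyXU !nth_mkt /xvar comp_mpolyXU nth_mkt split_l.
Qed.

Lemma psi0_iny d m (u : {mpoly int[d.+1]}) :
  comp_mpoly (tpsi0 d m) (in_y u) = u.
Proof.
rewrite -[RHS]comp_mpoly_id.
change ((comp_mpoly (tpsi0 d m) \o comp_mpoly [tuple yvar i | i < d.+1]) u = comp_mpoly [tuple 'X_i | i < d.+1] u).
apply: hom_eq => i /=.
by rewrite !comp_mpolyXU !nth_mkt /yvar comp_mpolyXU nth_mkt split_r.
Qed.

Lemma kap_g d m (g : {mpoly int[d.+1]}) : (m < d)%N ->
  (exists c : 'I_m.+1 -> {mpoly int[d.+1]},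
     g = \sum_(i < m.+1) c i * 'X_(inord i : 'I_d.+1)) ->
  comp_mpoly (tkap d m) g = 0.
Proof.
move=> lmd [c ->]; rewrite rmorph_sum big1 // => i _.
rewrite rmorphM /= comp_mpolyXU nth_mkt inordK; last by rewrite (leq_trans (ltn_ord i)) // ltnS ltnW.
by rewrite -ltnS ltn_ord mulr0.
Qed.

Lemma kap_h d m (h : {mpoly int[d.+1]}) :
  (forall mo, mo \in msupp h -> forall i : 'I_d.+1, (i <= m)%N -> mo i = 0%N) ->
  comp_mpoly (tkap d m) h = h.
Proof.
move=> hs; rewrite comp_mpolyEX [RHS]mpolyE; apply: eq_big_seq => mo /hs hmo.
congr (_ *: _); rewrite comp_mpolyX mpolyXE_id; apply: eq_bigr => i _.
rewrite tnth_mktuple; case: ifP => // /hmo ->; by rewrite !expr0.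
Qed.

Lemma psi0_Lam d m p (w : {mpoly int[d.+1 + d.+1]}) : (0 < p)%N ->
  comp_mpoly (tpsi0 d m) (LambdaP p w) = LambdaS p (comp_mpoly (tpsi0 d m) w).
Proof.
move=> p0; rewrite /LambdaP /LambdaS.
match goal with |- comp_mpoly ?a (comp_mpoly ?b w) = comp_mpoly ?c (comp_mpoly ?e w) =>
  change ((comp_mpoly a \o comp_mpoly b) w = (comp_mpoly c \o comp_mpoly e) w) end.
apply: hom_eq => i /=.
rewrite !comp_mpolyXU !nth_mkt; rewrite -(splitK i); case: (split i) => j /=.
  rewrite split_l.
  rewrite /xvar rmorphXn /= comp_mpolyXU nth_mkt split_l.
  by case: ifP => _; rewrite ?rmorph0 ?expr0n ?(gtn_eqF p0) // comp_mpolyXU nth_mkt.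
rewrite split_r /xvar /yvar rmorphD rmorphXn rmorphXn rmorphB /= !comp_mpolyXU !nth_mkt split_l split_r.
by case: ifP => _; rewrite ?rmorph0 ?subr0 ?subrr ?expr0n ?(gtn_eqF p0) ?add0r ?addr0 // comp_mpolyXU nth_mkt.
Qed.

Lemma Lam_frob d p (w : {mpoly int[d.+1 + d.+1]}) : prime p -> pdvd p (LambdaP p w - w ^+ p).
Proof.
move=> pp; rewrite /LambdaP; apply: frob_lift => // i.
rewrite /= comp_mpolyXU nth_mkt -(splitK i); case: (split i) => j /=.
  by rewrite split_l /xvar subrr; exists 0; rewrite mulr0.
rewrite split_r /yvar.
have [z Ez] := binom_p p (xvar j) ('X_(rshift d.+1 j) - xvar j) pp.
exists (- z); rewrite mulrN -Ez.
set a := xvar j; set b := 'X_(rshift d.+1 j). by rewrite [a + _]addrC subrK !opprB addrA [_ + a ^+ p]addrC.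
Qed.

Lemma psi0_phi d m p (v : {mpoly int[d.+1 + d.+1]}) : prime p ->
  comp_mpoly (tpsi0 d m) (phiP p v) = phiS p (comp_mpoly (tpsi0 d m) v).
Proof.
move=> pp; have p0 := prime_gt0 pp.
have [W EW] := Lam_frob d p v pp.
rewrite /phiP /phiS EW mdivzK // -psi0_Lam // -rmorphXn -rmorphB EW rmorphM rmorph_nat.
by rewrite mdivzK.
Qed.

Notation Tpoly d := {mpoly {mpoly int[d.+1]}[d.+1]}.
Notation hpsi d m := (fun i : 'I_(d.+1 + d.+1) => match split i with inl j => if (j <= m)%N then 0 else ((('X_j : {mpoly int[d.+1]})%:MP - 'X_j) : Tpoly d) | inr j => (('X_j : {mpoly int[d.+1]})%:MP : Tpoly d) end).
Notation psi d m := (mmap (intr : int -> Tpoly d) (hpsi d m)).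

Lemma psiX d m i : psi d m 'X_i = hpsi d m i.
Proof. by rewrite mmapX mmap1U. Qed.

Lemma psi_coef0 d m w : mcoeff 0 (psi d m w) = comp_mpoly (tpsi0 d m) w.
Proof.
change ((mcoeff 0 \o psi d m) w = comp_mpoly (tpsi0 d m) w).
apply: hom_eq => i /=; rewrite psiX comp_mpolyXU nth_mkt.
case: (split i) => j; last by rewrite mcoeffC eqxx mulr1.
case: ifP => _; first by rewrite mcoeff0.
by rewrite mcoeffB mcoeffC eqxx mulr1 mcoeffX mnm1_eq0 subr0.
Qed.

Lemma psi_iny d m u : psi d m (in_y u) = u%:MP.
Proof.
change ((psi d m \o comp_mpoly [tuple yvar i | i < d.+1]) u = mpolyC _ u).
apply: hom_eq => i /=.
by rewrite comp_mpolyXU nth_mkt /yvar psiX split_r.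
Qed.

Lemma psi_x d m (k : 'I_d.+1) : (k <= m)%N -> psi d m (xvar k) = 0.
Proof. by move=> km; rewrite /xvar psiX split_l km. Qed.

Lemma psi_t d m (i : 'I_d.+1) :
  psi d m (yvar i - xvar i) = if (i <= m)%N then ('X_i)%:MP else 'X_i.
Proof.
rewrite rmorphB /= /xvar /yvar !psiX split_l split_r.
by case: ifP => _; rewrite ?subr0 // opprB addrC subrK.
Qed.

Lemma coefMX0 n (R : comNzRingType) (A : {mpoly R[n]}) (mx k : 'X_{1..n}) (i : 'I_n) :
  (k i < mx i)%N -> (A * 'X_[mx])@_k = 0.
Proof.
move=> lt; apply/memN_msupp_eq0; apply/negP.
rewrite (perm_mem (msuppMX A mx)) => /mapP [m' _ Ek].
by move: lt; rewrite Ek mnmDE ltnNge leq_addr.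
Qed.

Lemma big_narrow (R : Type) (idx : R) (op : Monoid.com_law idx) d m (F : 'I_d.+1 -> R) :
  (m < d)%N ->
  \big[op/idx]_(i < d.+1) (if (i <= m)%N then F i else idx) = \big[op/idx]_(k < m.+1) F (inord k).
Proof.
move=> lmd; rewrite (big_ord_widen d.+1 (fun k : nat => F (inord k))); last by rewrite ltnS ltnW.
by rewrite [RHS]big_mkcond; apply: eq_bigr => i _; rewrite inord_val ltnS.
Qed.

Lemma prod_t d m N : (m < d)%N ->
  (\prod_(i < d.+1) (if (i <= m)%N then (('X_i : {mpoly int[d.+1]})%:MP : Tpoly d) else 'X_i)) ^+ N
  = ((\prod_(k < m.+1) ('X_(inord k : 'I_d.+1) : {mpoly int[d.+1]})) ^+ N)%:MP
    * 'X_[([multinom (if (i <= m)%N then 0%N else 1%N) | i < d.+1] *+ N)%MM].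
Proof.
move=> lmd.
have -> : \prod_(i < d.+1) (if (i <= m)%N then (('X_i : {mpoly int[d.+1]})%:MP : Tpoly d) else 'X_i)
   = (\prod_(i < d.+1) (if (i <= m)%N then ('X_i : {mpoly int[d.+1]}) else 1))%:MP
     * \prod_(i < d.+1) (if (i <= m)%N then 1 else 'X_i).
  rewrite rmorph_prod -big_split; apply: eq_bigr => i _ /=.
  by case: ifP => _; rewrite ?rmorph1 ?mulr1 ?mul1r.
rewrite exprMn -rmorphXn big_narrow //; congr (_ * _).
rewrite -mpolyXn mpolyXE_id; congr (_ ^+ N); apply: eq_bigr => i _; rewrite mnmE.
by case: ifP.
Qed.

Lemma mcoeff_zM k (Sx : comNzRingType) (A : {mpoly Sx[k]}) (z : int) mo :
  mcoeff mo (A * z%:~R) = mcoeff mo A * z%:~R.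
Proof. by rewrite !mulrzr raddfMz. Qed.

Lemma mcoeff_zl k (Sx : comNzRingType) (A : {mpoly Sx[k]}) (z : int) mo :
  mcoeff mo (z%:~R * A) = mcoeff mo A * z%:~R.
Proof. by rewrite mulrC mcoeff_zM. Qed.

Lemma mpolyC_int k (z : int) : (z%:MP : {mpoly int[k]}) = z%:~R.
Proof. by rewrite -[in LHS](intz z) rmorph_int. Qed.

Lemma final_eq k (A0 A1 A2 Y : {mpoly {mpoly int[k]}[k]}) (f : {mpoly int[k]}) (z : int) mo :
  mcoeff mo (A0 * (z%:~R * Y)) + mcoeff mo (A1 * f%:MP) + mcoeff mo (A2 * z%:~R)
  = mcoeff mo A1 * f + (mcoeff mo (A0 * Y) + mcoeff mo A2) * z%:MP.
Proof.
rewrite [A0 * (_ * Y)]mulrCA mcoeff_zl mcoeff_zM [A1 * _]mulrC mcoeffCM mpolyC_int.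
ring.
Qed.

Theorem lemma8p3 (d m p : nat) (g h : {mpoly int[d.+1]}) :
  prime p ->
  (m < d)%N ->
  (exists c : 'I_m.+1 -> {mpoly int[d.+1]},
     g = \sum_(i < m.+1) c i * 'X_(inord i : 'I_d.+1))
  ->
  (forall mo, mo \in msupp h -> forall i : 'I_d.+1, (i <= m)%N -> mo i = 0%N) ->
  let f := g + (p%:Z)%:MP * h in
  ~ top_cech_class_zero
      [ffun j : 'I_2 => if val j == 0%N then f else (p%:Z)%:MP]
      (fun i : 'I_m.+1 => ('X_(inord i : 'I_d.+1)
                            : {mpoly int[d.+1]}))
      (phiS p g) p ->
  ~ top_cech_class_zero
      [ffun j : 'I_3 => if val j == 0%N then in_x f
                        else if val j == 1%N then in_y f
                        else (p%:Z)%:MP]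
      (fun i : 'I_d.+1 => yvar i - xvar i)
      (phiP p (in_y f - in_x f)) p.
Proof.
move=> pp lmd hg hh f H1 [N [c [r Er]]]; apply: H1.
have Hu0 : mcoeff 0 (psi d m (phiP p (in_y f - in_x f))) = phiS p g.
  rewrite psi_coef0 psi0_phi // rmorphB /= psi0_iny psi0_inx /f rmorphD rmorphM /=.
  rewrite (kap_g _ _ _ lmd hg) (kap_h _ _ _ hh) add0r; congr (phiS p _); rewrite comp_mpolyC; exact: addrK.
set m1 : 'X_{1..d.+1} := [multinom (if (i <= m)%N then 0%N else 1%N) | i < d.+1].
set mN := (m1 *+ N)%MM.
have E := congr1 (fun w => mcoeff mN (psi d m w)) Er.
rewrite /= in E.
have L1 : mcoeff mN (psi d m ((\prod_(i < d.+1) (yvar i - xvar i)) ^+ N * phiP p (in_y f - in_x f)))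
   = (\prod_(k < m.+1) ('X_(inord k : 'I_d.+1) : {mpoly int[d.+1]})) ^+ N * phiS p g.
  rewrite rmorphM rmorphXn rmorph_prod /=.
  under eq_bigr => i _ do rewrite psi_t.
  rewrite (prod_t d m N lmd) -mulrA mcoeffCM; congr (_ * _).
  rewrite -Hu0 mulrC; have := mcoeffMX (psi d m (phiP p (in_y f - in_x f))) mN 0%MM.
  by rewrite addm0.
have L2 : mcoeff mN (psi d m (\sum_(i < d.+1) c i * (yvar i - xvar i) ^+ (N + p)))
   = \sum_(k < m.+1) mcoeff mN (psi d m (c (inord k))) * ('X_(inord k : 'I_d.+1))^+(N+p).
  rewrite rmorph_sum raddf_sum /= -(big_narrow _ _ _ d m (fun i : 'I_d.+1 => mcoeff mN (psi d m (c i)) * ('X_i : {mpoly int[d.+1]})^+(N+p)) lmd); apply: eq_bigr => i _.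
  rewrite rmorphM rmorphXn /= psi_t; case: ifP => hi.
  rewrite -[(_%:MP_[d.+1]) ^+ (N + p)]rmorphXn mulrC mcoeffCM mulrC //.
  rewrite mpolyXn.
  apply: (coefMX0 _ _ _ _ _ i).
  rewrite /mN !mulmnE mnmE hi mnm1E eqxx !mul1n -{1}[N]addn0 ltn_add2l.
  exact: prime_gt0.
rewrite rmorphB mcoeffB /= in E.
have E' : (\prod_(k < m.+1) ('X_(inord k : 'I_d.+1) : {mpoly int[d.+1]})) ^+ N * phiS p g
   - \sum_(k < m.+1) mcoeff mN (psi d m (c (inord k))) * ('X_(inord k : 'I_d.+1))^+(N+p)
   = mcoeff mN (psi d m (\sum_(j < 3) r j * [ffun j0 : 'I_3 => if val j0 == 0%N then in_x f
                        else if val j0 == 1%N then in_y f else (p%:Z)%:MP] j)).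
  by rewrite -L1 -L2; exact: E.
clear E L1 L2.
have Pg : psi d m (in_x g) = 0.
  rewrite /in_x; change ((psi d m \o comp_mpoly [tuple xvar i | i < d.+1]) g = 0).
  case: hg => cg ->; rewrite rmorph_sum big1 // => i _.
  rewrite rmorphM /= comp_mpolyXU nth_mkt psi_x ?mulr0 //.
  rewrite inordK; last by rewrite (leq_trans (ltn_ord i)) // ltnS ltnW.
  by rewrite -ltnS ltn_ord.
have PC (z : int) : psi d m (z%:MP) = z%:~R by rewrite mmapC.
have Pf : psi d m (in_x f) = (p%:Z)%:~R * psi d m (in_x h).
  move: Pg; rewrite /in_x /f => Pg.
  change ((psi d m \o comp_mpoly [tuple xvar i | i < d.+1]) (g + (p%:Z)%:MP * h) = (p%:Z)%:~R * psi d m (comp_mpoly [tuple xvar i | i < d.+1] h)).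
  by rewrite rmorphD rmorphM /= Pg add0r comp_mpolyC PC.
exists N, (fun k => mcoeff mN (psi d m (c (inord k)))).
exists (fun j : 'I_2 => if val j == 0%N then mcoeff mN (psi d m (r (widen_ord (leqnSn 2) ord_max)))
   else mcoeff mN (psi d m (r (widen_ord (leqnSn 2) (widen_ord (leqnSn 1) ord_max))) * psi d m (in_x h)) + mcoeff mN (psi d m (r ord_max))).
rewrite E' rmorph_sum /= !big_ord_recr !big_ord0 /= !ffunE /=.
rewrite !mcoeffD mcoeff0 !add0r !rmorphM /= Pf psi_iny PC.
exact: final_eq.
Qed.
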